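(* Let ${\bold k}$ be an algebraically closed field of characteristic $p\ge3$. Then $(R_p\otimes{\bf Lie}_p)_{S_p}\cong{\bold k}$, i.e. the space of $S_p$-coinvariants of $R_p\otimes{\bf Lie}_p$ is one-dimensional.
   Context: ${\bf Lie}_p$ is the $S_p$-representation over ${\bold k}$ given by the arity-$p$ component of the Lie operad (the span of multilinear Lie monomials in $x_1,\dots,x_p$ in the free Lie algebra over ${\bold k}$). $R_p$ is the $(p-2)$-dimensional irreducible ${\bold k}S_p$-module of functions on $\{1,\dots,p\}$ with zero sum of values, modulo constant functions. *)

(* Defs.v *)
From HB Require Import structures.
From mathcomp Require Import all_boot all_order all_algebra all_fingroup.
Set Implicit Arguments.
Unset Strict Implicit.
Unset Printing Implicit Defensive.
Import GRing.Theory.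
Local Open Scope ring_scope.

(* Concrete model of the S_p-modules involved, over a field k.
   - k^{1..p} is modelled by F := {ffun 'I_p -> k^o}.
   - Multilinear part of the free associative algebra on x_0..x_{p-1}:
     words x_{s 0} x_{s 1} ... x_{s (p-1)} indexed by s : {perm 'I_p};
     modelled by A := {ffun {perm 'I_p} -> k^o}.
   - Lie_p = subspace of A spanned by the (expanded) multilinear Lie monomials
     [..[[x_{t 0}, x_{t 1}], x_{t 2}], ..., x_{t (p-1)}] (left-normed brackets).
   - S_p acts on the index set by g : i |-> g i, on words by x_i |-> x_{g i}. *)

Section LieModel.
Variables (k : fieldType) (p : nat).

Definition word (s : {perm 'I_p}) : seq 'I_p := [seq s i | i <- enum 'I_p].

Definition lcomb := seq (k * seq 'I_p).

(* right-bracketing with a new letter b: u |-> u x_b - x_b u *)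
Definition bracket_letter (u : lcomb) (b : 'I_p) : lcomb :=
  [seq (c.1, rcons c.2 b) | c <- u] ++ [seq (- c.1, b :: c.2) | c <- u].

Definition lnbracket (s : seq 'I_p) : lcomb :=
  match s with
  | [::] => [::]
  | a :: s' => foldl bracket_letter [:: (1, [:: a])] s'
  end.

Definition multilin (u : lcomb) : {ffun {perm 'I_p} -> k^o} :=
  [ffun s => \sum_(c <- u | c.2 == word s) c.1].

Definition lie_monomial (t : {perm 'I_p}) : {ffun {perm 'I_p} -> k^o} :=
  multilin (lnbracket (word t)).

Definition Lie : {vspace {ffun {perm 'I_p} -> k^o}} :=
  <<[seq lie_monomial t | t <- enum {perm 'I_p}]>>%VS.

Definition delta (i : 'I_p) : {ffun 'I_p -> k^o} := [ffun j => (i == j)%:R].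

(* zero-sum functions on {1..p} (spanned by the e_i - e_j) *)
Definition zerosum : {vspace {ffun 'I_p -> k^o}} :=
  <<[seq delta i - delta j | i <- enum 'I_p, j <- enum 'I_p]>>%VS.

Definition constants : {vspace {ffun 'I_p -> k^o}} :=
  <[ [ffun _ => (1 : k^o)] ]>%VS.

(* tensor product: F (x) A realised as functions on 'I_p * {perm 'I_p} *)
Definition tens (f : {ffun 'I_p -> k^o}) (v : {ffun {perm 'I_p} -> k^o})
  : {ffun ('I_p * {perm 'I_p}) -> k^o} := [ffun x => f x.1 * v x.2].

Definition tensv (U : {vspace {ffun 'I_p -> k^o}})
    (W : {vspace {ffun {perm 'I_p} -> k^o}})
  : {vspace {ffun ('I_p * {perm 'I_p}) -> k^o}} :=
  <<[seq tens f v | f <- vbasis U, v <- vbasis W]>>%VS.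

(* diagonal S_p action on F (x) A:  g.(e_i (x) w_s) = e_{g i} (x) w_{g o s} *)
Definition act (g : {perm 'I_p}) (X : {ffun ('I_p * {perm 'I_p}) -> k^o})
  : {ffun ('I_p * {perm 'I_p}) -> k^o} :=
  [ffun x => X ((g^-1)%g x.1, (x.2 * g^-1)%g)].

(* R_p (x) Lie_p = (Z (x) Lie_p) / (C (x) Lie_p), where Z = zero-sum functions,
   C = constants (C <= Z since char k = p).  Its S_p-coinvariants are
   (Z (x) Lie_p) / (C (x) Lie_p + span{ g.X - X : g in S_p, X in Z (x) Lie_p }). *)
Definition coinv_relations : {vspace {ffun ('I_p * {perm 'I_p}) -> k^o}} :=
  (tensv constants Lie +
   <<[seq act g X - X | g <- enum {perm 'I_p}, X <- vbasis (tensv zerosum Lie)]>>)%VS.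

Definition coinv_dim : nat :=
  (\dim (tensv zerosum Lie) - \dim coinv_relations)%N.

End LieModel.

(* Main.v *)
Require Import Defs.
From mathcomp Require Import all_boot all_order all_algebra all_fingroup.
From mathcomp Require Import ring.
Set Implicit Arguments.
Unset Strict Implicit.
Unset Printing Implicit Defensive.
Import GRing.Theory.
Local Open Scope ring_scope.

Section Tr.
Variables (k : fieldType) (p : nat).
Implicit Types (g h : seq 'I_p -> k) (w s : seq 'I_p).

Definition ev g (u : lcomb k p) : k := \sum_(c <- u) c.1 * g c.2.

Fixpoint Tr (s : seq 'I_p) (g : seq 'I_p -> k) (w : seq 'I_p) : k :=
  match s with
  | [::] => g w
  | b :: s' => Tr s' g (rcons w b) - Tr s' g (b :: w)
  end.

Lemma ev_bracket g u b :
  ev g (bracket_letter u b) = \sum_(c <- u) c.1 * (g (rcons c.2 b) - g (b :: c.2)).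
Proof.
rewrite /ev /bracket_letter big_cat !big_map /= -big_split /=.
by apply: eq_bigr => c _; rewrite mulrBr mulNr.
Qed.

Lemma ev_foldl s : forall u g,
  ev g (foldl (@bracket_letter k p) u s) =
  \sum_(c <- u) c.1 * Tr s g c.2.
Proof.
elim: s => [|b s IH] u g /=; first by [].
by rewrite IH /ev /bracket_letter big_cat !big_map /= -big_split /=;
  apply: eq_bigr => c _; rewrite mulrBr mulNr.
Qed.

Lemma ev_lnbracket a s g : ev g (lnbracket k (a :: s)) = Tr s g [:: a].
Proof. by rewrite /= ev_foldl big_cons big_nil mul1r addr0. Qed.

Lemma Tr_local s : forall w g g',
  (forall w', perm_eq w' (w ++ s) -> g w' = g' w') -> Tr s g w = Tr s g' w.
Proof.
elim: s => [|b s IH] w g g' H /=; first by apply: H; rewrite cats0.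
congr (_ - _); apply: IH => w' Hw'; apply: H.
  by rewrite -cat_rcons.
by rewrite (permPl Hw') (perm_catCA [:: b] w s).
Qed.

Lemma Tr_sum I (r : seq I) (c : I -> k) (F : I -> seq 'I_p -> k) s : forall w,
  Tr s (fun w' => \sum_(i <- r) c i * F i w') w = \sum_(i <- r) c i * Tr s (F i) w.
Proof.
elim: s => [|b s IH] w //=.
by rewrite !IH -sumrB; apply: eq_bigr => i _; rewrite mulrBr.
Qed.

Lemma Tr_lin s a g1 g2 : forall w,
  Tr s (fun w' => a * g1 w' + g2 w') w = a * Tr s g1 w + Tr s g2 w.
Proof.
elim: s => [|b s IH] w //=.
by rewrite !IH mulrBr opprD addrACA.
Qed.

Lemma Tr_B s g1 g2 : forall w,
  Tr s (fun w' => g1 w' - g2 w') w = Tr s g1 w - Tr s g2 w.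
Proof.
elim: s => [|b s IH] w //=.
by rewrite !IH; ring.
Qed.

Lemma Tr_const s c : s != [::] -> forall w, Tr s (fun _ => c) w = 0.
Proof.
elim: s => [|b s IH] //= _ w.
case: s IH => [|b' s'] IH; first by rewrite /= subrr.
by rewrite !IH // subrr.
Qed.

Lemma Tr_map (g0 : {perm 'I_p}) s G : forall w,
  Tr (map g0 s) G (map g0 w) = Tr s (fun w' => G (map g0 w')) w.
Proof.
elim: s => [|b s IH] w //=.
by rewrite -map_rcons -IH -IH.
Qed.

Lemma Tr_head x0 x s : x \notin s -> forall w, w != [::] ->
  Tr s (fun w' => (x == head x0 w')%:R) w = (x == head x0 w)%:R :> k.
Proof.
elim: s => [|b s IH] //=; rewrite inE negb_or => /andP[xb xs] w wn.
rewrite !IH //; last by case: w wn.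
by case: w wn => //= y w _; rewrite (negbTE xb) subr0.
Qed.

End Tr.

Section Words.
Variable p : nat.
Implicit Types (s t g : {perm 'I_p}).

Lemma size_word s : size (word s) = p.
Proof. by rewrite size_map size_enum_ord. Qed.

Lemma nth_word s (i : 'I_p) x0 : nth x0 (word s) i = s i.
Proof.
by rewrite (nth_map i) ?size_enum_ord // nth_ord_enum.
Qed.

Lemma word_inj : injective (@word p).
Proof.
move=> s1 s2 E; apply/permP => i.
by rewrite -(nth_word s1 i i) E nth_word.
Qed.

Lemma word_perm s : perm_eq (word s) (enum 'I_p).
Proof.
apply: uniq_perm; first by rewrite map_inj_uniq ?enum_uniq //; apply: perm_inj.
  exact: enum_uniq.
move=> x; rewrite mem_enum; apply/mapP; exists (s^-1 x)%g; first by rewrite mem_enum.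
by rewrite permKV.
Qed.

Lemma word_surj w : perm_eq w (enum 'I_p) -> exists s, word s = w.
Proof.
move=> Hw.
have sz : size w = p by rewrite (perm_size Hw) size_enum_ord.
have uw : uniq w by rewrite (perm_uniq Hw) enum_uniq.
pose f (i : 'I_p) := nth i w i.
have finj : injective f.
  move=> i j; rewrite /f => E.
  apply: val_inj => /=; apply/eqP.
  rewrite -(nth_uniq i _ _ uw) ?sz //.
  by rewrite E (set_nth_default i j) ?sz.
exists (perm finj).
case: w Hw sz uw @f finj => [|x0 w'] Hw sz uw f finj.
  by apply: size0nil; rewrite size_word.
apply: (@eq_from_nth _ x0); first by rewrite size_word.
move=> i; rewrite size_word => ip.
rewrite (nth_word (perm finj) (Ordinal ip)) permE /f /=.
by rewrite (set_nth_default x0) ?sz.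
Qed.

Lemma word_mul s g : word (s * g)%g = map g (word s).
Proof. by rewrite /word -map_comp; apply: eq_map => i /=; rewrite permM. Qed.

End Words.

Section LieFacts.
Variables (k : fieldType) (p : nat).
Implicit Types (s t g : {perm 'I_p}).

Definition ind s (w : seq 'I_p) : k := (w == word s)%:R.

Lemma multilin_ev (u : lcomb k p) s : multilin u s = ev (ind s) u.
Proof.
rewrite /multilin ffunE /ev big_mkcond /=; apply: eq_bigr => c _.
by rewrite /ind; case: eqP => _; rewrite ?mulr1 ?mulr0.
Qed.

Lemma lie_Tr t (a : 'I_p) (s' : seq 'I_p) s : word t = a :: s' ->
  lie_monomial k t s = Tr s' (ind s) [:: a].
Proof. by move=> E; rewrite /lie_monomial multilin_ev E ev_lnbracket. Qed.

Lemma sum_word s0 (F : {perm 'I_p} -> k) :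
  \sum_s (word s0 == word s)%:R * F s = F s0.
Proof.
rewrite (bigD1 s0) //= eqxx mul1r big1 ?addr0 // => s ns.
by rewrite (inj_eq (@word_inj p)) eq_sym (negbTE ns) mul0r.
Qed.

Lemma lie_mul t g s :
  lie_monomial k (t * g)%g s = lie_monomial k t (s * g^-1)%g.
Proof.
case E: (word t) => [|a s'].
  by rewrite /lie_monomial word_mul E /= /multilin !ffunE !big_nil.
rewrite (lie_Tr (s * g^-1)%g E) (@lie_Tr (t * g)%g (g a) (map g s') s); last by rewrite word_mul E.
rewrite -[[:: g a]]/(map g [:: a]) Tr_map; apply: Tr_local => w' _.
rewrite /ind; congr (_%:R).
have -> : word s = map g (word (s * g^-1)%g) by rewrite -word_mul mulgKV.
by rewrite (inj_eq (inj_map (@perm_inj _ g))).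
Qed.

Lemma lie_sum0 t : (2 <= p)%N -> \sum_s lie_monomial k t s = 0.
Proof.
move=> p2; case E: (word t) => [|a s'].
  by have := size_word t; rewrite E => /esym/eqP; rewrite -leqn0 leqNgt (leq_trans _ p2).
under eq_bigr => s _ do rewrite (lie_Tr s E) -[Tr _ _ _]mul1r.
rewrite -Tr_sum (@Tr_local _ _ _ _ _ (fun _ => 1)); last first.
  move=> w' Hw'.
  have [s0 <-] : exists s0, word s0 = w'.
    by apply: word_surj; rewrite (permPl Hw') /= -E word_perm.
  rewrite /ind; under eq_bigr => s _ do rewrite mul1r -[_%:R]mulr1.
  by rewrite sum_word.
apply: Tr_const.
by case: s' E => [|b s''] E //; have := size_word t; rewrite E => /= sz; move: p2; rewrite -sz.
Qed.

Lemma lie_phi t (e0 : 'I_p) (r : seq 'I_p) (a : 'I_p) (s' : seq 'I_p) (F : 'I_p -> k) :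
  enum 'I_p = e0 :: r -> word t = a :: s' ->
  \sum_(s : {perm 'I_p}) F (s e0) * lie_monomial k t s = Tr s' (fun w => F (head a w)) [:: a].
Proof.
move=> Ee E.
under eq_bigr => s _ do rewrite (lie_Tr s E).
rewrite -Tr_sum; apply: Tr_local => w' Hw'.
have [s0 <-] : exists s0, word s0 = w'.
  by apply: word_surj; rewrite (permPl Hw') /= -E word_perm.
under eq_bigr => s _ do rewrite /ind mulrC.
by rewrite sum_word /word Ee.
Qed.

End LieFacts.

Lemma span_ind (K : fieldType) (vT : vectType K) (X : seq vT) (P : vT -> Prop) :
  P 0 -> (forall a u v, P u -> P v -> P (a *: u + v)) ->
  {in X, forall x, P x} -> forall v, v \in <<X>>%VS -> P v.
Proof.
move=> P0 Pl PX v; rewrite -[X]/(tval (in_tuple X)) => /coord_span ->.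
apply: big_ind => //.
  by move=> x y Px Py; rewrite -[x]scale1r; apply: Pl.
move=> i _; rewrite -[_ *: _]addr0; apply: Pl => //; apply: PX.
exact: mem_nth.
Qed.

Section Vec.
Variables (k : fieldType) (p : nat).
Implicit Types (s t g : {perm 'I_p}).
Local Notation F := {ffun 'I_p -> k^o}.
Local Notation A := {ffun {perm 'I_p} -> k^o}.
Local Notation W := {ffun ('I_p * {perm 'I_p}) -> k^o}.

Definition frl g (f : F) : F := [ffun j => f ((g^-1)%g j)].
Definition vrl g (v : A) : A := [ffun s => v (s * g^-1)%g].
Definition phi (e0 : 'I_p) (X : W) : k := \sum_(s : {perm 'I_p}) X (s e0, s).

Lemma tens_linl a (f f' : F) (v : A) : tens (a *: f + f') v = a *: tens f v + tens f' v.
Proof. by apply/ffunP => x; rewrite !ffunE mulrDl -scalerAl. Qed.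

Lemma tens_linr a (f : F) (v v' : A) : tens f (a *: v + v') = a *: tens f v + tens f v'.
Proof. by apply/ffunP => x; rewrite !ffunE mulrDr -scalerAr. Qed.

Lemma act_lin g a (X Y : W) : Defs.act g (a *: X + Y) = a *: Defs.act g X + Defs.act g Y.
Proof. by apply/ffunP => x; rewrite !ffunE. Qed.

Lemma act_tens g f v : Defs.act g (tens f v) = tens (frl g f) (vrl g v).
Proof. by apply/ffunP => x; rewrite !ffunE. Qed.

Lemma frel_lin g a (f f' : F) : frl g (a *: f + f') = a *: frl g f + frl g f'.
Proof. by apply/ffunP => x; rewrite !ffunE. Qed.

Lemma vrel_lin g a (v v' : A) : vrl g (a *: v + v') = a *: vrl g v + vrl g v'.
Proof. by apply/ffunP => x; rewrite !ffunE. Qed.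

Lemma frel_delta g i : frl g (delta k i) = delta k (g i).
Proof.
apply/ffunP => j; rewrite !ffunE; congr (_%:R).
by rewrite -{1}(permK g i) (inj_eq (@perm_inj _ _)).
Qed.

Lemma vrel_lie g t : vrl g (lie_monomial k t) = lie_monomial k (t * g)%g.
Proof. by apply/ffunP => s; rewrite ffunE lie_mul. Qed.

Lemma phi_lin e0 a (X Y : W) : phi e0 (a *: X + Y) = a * phi e0 X + phi e0 Y.
Proof.
rewrite /phi mulr_sumr -big_split /=; apply: eq_bigr => s _; by rewrite !ffunE.
Qed.

Lemma phi_act e0 g (X : W) : phi e0 (Defs.act g X) = phi e0 X.
Proof.
rewrite /phi (reindex_inj (@mulIg _ g)) /=.
by apply: eq_bigr => s _; rewrite ffunE /= permM permK mulgK.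
Qed.

Lemma phi_tens e0 f v : phi e0 (tens f v) = \sum_(s : {perm 'I_p}) f (s e0) * v s.
Proof. by apply: eq_bigr => s _; rewrite ffunE. Qed.

Lemma memv_tens (U : {vspace F}) (V' : {vspace A}) (f : F) (v : A) : f \in U -> v \in V' -> tens f v \in tensv U V'.
Proof.
rewrite -{1}(span_basis (vbasisP U)) => fU.
rewrite -{1}(span_basis (vbasisP V')) => vV.
move: f fU; apply: span_ind.
- by rewrite (_ : tens 0 v = 0) ?mem0v //; apply/ffunP => x; rewrite !ffunE mul0r.
- by move=> a u u' Hu Hu'; rewrite tens_linl memvD // memvZ.
move=> b bU; move: v vV; apply: span_ind.
- by rewrite (_ : tens b 0 = 0) ?mem0v //; apply/ffunP => x; rewrite !ffunE mulr0.
- by move=> a u u' Hu Hu'; rewrite tens_linr memvD // memvZ.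
by move=> c cV; apply: memv_span; apply: allpairs_f.
Qed.

End Vec.

Section Main.
Variables (k : fieldType) (p : nat).
Hypothesis charp : p \in [pchar k].
Hypothesis p3 : (3 <= p)%N.
Implicit Types (s t g : {perm 'I_p}).
Local Notation F := {ffun 'I_p -> k^o}.
Local Notation A := {ffun {perm 'I_p} -> k^o}.
Local Notation W := {ffun ('I_p * {perm 'I_p}) -> k^o}.
Local Notation Z := (zerosum k p).
Local Notation L := (Lie k p).
Local Notation T := (tensv (zerosum k p) (Lie k p)).
Local Notation Rel := (coinv_relations k p).

Lemma two_neq0 : (2%:R : k) != 0.
Proof.
rewrite -(dvdn_pcharf charp); apply/negP => /(@dvdn_leq _ 2 isT) H.
by move: (leq_trans p3 H).
Qed.

Lemma tensBl (f f' : F) (v : A) : tens (f - f') v = tens f v - tens f' v.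
Proof. by apply/ffunP => x; rewrite !ffunE mulrBl. Qed.

Lemma tensNr (f : F) (v : A) : tens f (- v) = - tens f v.
Proof. by apply/ffunP => x; rewrite !ffunE mulrN. Qed.

Lemma tens0l (v : A) : tens 0 v = 0.
Proof. by apply/ffunP => x; rewrite !ffunE mul0r. Qed.

Lemma delta_Z i j : delta k i - delta k j \in Z.
Proof. by apply: memv_span; apply: allpairs_f; rewrite mem_enum. Qed.

Lemma lie_L t : lie_monomial k t \in L.
Proof. by apply: memv_span; apply: map_f; rewrite mem_enum. Qed.

Lemma frel_Z g f : f \in Z -> frl g f \in Z.
Proof.
move: f; apply: span_ind.
- by rewrite (_ : frl g 0 = 0) ?mem0v //; apply/ffunP => x; rewrite !ffunE.
- by move=> a u v Hu Hv; rewrite frel_lin memvD // memvZ.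
move=> z /allpairsP[[i j] [_ _ ->]] /=.
rewrite (_ : frl g _ = frl g (delta k i) - frl g (delta k j)).
  by rewrite !frel_delta delta_Z.
by apply/ffunP => x; rewrite !ffunE.
Qed.

Lemma vrel_L g v : v \in L -> vrl g v \in L.
Proof.
move: v; apply: span_ind.
- by rewrite (_ : vrl g 0 = 0) ?mem0v //; apply/ffunP => x; rewrite !ffunE.
- by move=> a u v Hu Hv; rewrite vrel_lin memvD // memvZ.
by move=> z /mapP[t _ ->]; rewrite vrel_lie lie_L.
Qed.

Lemma act_T g X : X \in T -> Defs.act g X \in T.
Proof.
move: X; apply: span_ind.
- by rewrite (_ : Defs.act g 0 = 0) ?mem0v //; apply/ffunP => x; rewrite !ffunE.
- by move=> a u v Hu Hv; rewrite act_lin memvD // memvZ.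
move=> z /allpairsP[[b c] [bZ cL ->]] /=.
rewrite act_tens memv_tens //.
  by apply: frel_Z; apply: vbasis_mem.
by apply: vrel_L; apply: vbasis_mem.
Qed.

Lemma const_Z : [ffun _ => (1 : k^o)] \in Z.
Proof.
have [e0 _] : exists e0 : 'I_p, true.
  by exists (Ordinal (ltnW (ltnW p3))).
rewrite (_ : [ffun _ => _] = \sum_(i : 'I_p) (delta k i - delta k e0)).
  by apply: memv_suml => i _; apply: delta_Z.
apply/ffunP => j; rewrite sum_ffunE !ffunE.
under eq_bigr => i _ do rewrite !ffunE.
have Hp : (p%:R : k^o) = 0 by exact: (pcharf0 charp).
rewrite sumrB sumr_const card_ord -[_ *+ p]mulr_natr Hp mulr0 subr0.
by rewrite (bigD1 j) //= eqxx big1 ?addr0 // => i /negbTE ->.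
Qed.

Lemma Rel_T : (Rel <= T)%VS.
Proof.
rewrite subv_add; apply/andP; split; apply/span_subvP => z.
  move=> /allpairsP[[b c] [bC cL ->]] /=.
  apply: memv_tens; last by apply: vbasis_mem.
  move: bC => /= /vbasis_mem /vlineP[a ->].
  by rewrite memvZ // const_Z.
move=> /allpairsP[[g X] [_ XT ->]] /=.
by rewrite memvB // ?act_T // vbasis_mem.
Qed.

Lemma relT g X : X \in T -> Defs.act g X - X \in Rel.
Proof.
rewrite -{1}(span_basis (vbasisP T)); move: X; apply: span_ind.
- by rewrite (_ : Defs.act g 0 = 0) ?subr0 ?mem0v //; apply/ffunP => x; rewrite !ffunE.
- move=> a u v Hu Hv; rewrite act_lin.
  rewrite (_ : _ - _ = a *: (Defs.act g u - u) + (Defs.act g v - v)).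
    by rewrite memvD // memvZ.
  by rewrite scalerBr opprD addrACA.
move=> X XT; apply: (subvP (addvSr _ _)); apply: memv_span.
by apply: allpairs_f => //; rewrite mem_enum.
Qed.

Lemma enum3 : exists e0 e1 (rest : seq 'I_p), enum 'I_p = [:: e0, e1 & rest].
Proof.
case E: (enum 'I_p) => [|e0 [|e1 rest]]; last by exists e0, e1, rest.
  by exfalso; have := size_enum_ord p; rewrite E => /= p0; move: p3; rewrite -p0.
by exfalso; have := size_enum_ord p; rewrite E => /= p0; move: p3; rewrite -p0.
Qed.

Variables (e0 e1 : 'I_p) (rest : seq 'I_p).
Hypothesis Ee : enum 'I_p = [:: e0, e1 & rest].

Lemma uniq_e : [&& e0 \notin e1 :: rest, e1 \notin rest & uniq rest].
Proof. by have := enum_uniq 'I_p; rewrite Ee /= andbA. Qed.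

Lemma word1 : word (1%g : {perm 'I_p}) = [:: e0, e1 & rest].
Proof. by rewrite /word -Ee map_id_in // => x _; rewrite perm1. Qed.

Definition tau : {perm 'I_p} := tperm e0 e1.

Lemma wordtau : word tau = [:: e1, e0 & rest].
Proof.
have /and3P[n0 n1 _] := uniq_e.
rewrite /word Ee /= tpermL tpermR map_id_in // => x xr.
rewrite tpermD //; apply/eqP => E; subst x.
  by move: n0; rewrite inE xr orbT.
by move: n1; rewrite xr.
Qed.

Lemma lie_tau : lie_monomial k tau = - lie_monomial k 1.
Proof.
apply/ffunP => s; rewrite (lie_Tr k s wordtau).
have -> : (- lie_monomial k 1) s = - lie_monomial k 1 s by rewrite ffunE.
rewrite (lie_Tr k s word1) /=.
by rewrite opprB.
Qed.

Definition D x y : W := tens (delta k x - delta k y) (lie_monomial k 1).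
Definition X0 := D e0 e1.
Local Notation S := (Rel + <[X0]>)%VS.

Lemma D0y y : D e0 y \in S.
Proof.
have /and3P[n0 n1 _] := uniq_e.
have Rl : {subset Rel <= S} by apply/subvP; apply: addvSl.
have X0S : X0 \in S by apply: (subvP (addvSr _ _)); apply: memv_line.
case: (y =P e0) => [->|ne0]; first by rewrite /D subrr tens0l mem0v.
case: (y =P e1) => [->|ne1]; first by [].
have DT : D e0 y \in T by rewrite memv_tens ?delta_Z ?lie_L.
have R1 := relT tau DT.
have E1 : Defs.act tau (D e0 y) = - D e1 y.
  rewrite act_tens vrel_lie mul1g lie_tau tensNr; congr (- tens _ _).
  rewrite (_ : frl tau _ = frl tau (delta k e0) - frl tau (delta k y)).
    by rewrite !frel_delta tpermL tpermD // eq_sym; apply/eqP.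
  by apply/ffunP => x; rewrite !ffunE.
have EX : X0 = D e0 y - D e1 y.
  by rewrite /X0 /D -tensBl opprB addrA subrK.
rewrite E1 in R1.
have -> : D e0 y = 2%:R^-1 *: (X0 - (- D e1 y - D e0 y)).
  rewrite EX opprB opprK addrACA addNr addr0 -mulr2n -scaler_nat scalerA.
  by rewrite mulVf ?two_neq0 // scale1r.
by rewrite memvZ // memvB // Rl.
Qed.

Lemma Dxy x y : D x y \in S.
Proof.
rewrite (_ : D x y = D e0 y - D e0 x) ?memvB ?D0y //.
by rewrite /D -tensBl opprB [in RHS]addrC addrA subrK.
Qed.

Lemma T_S : (T <= S)%VS.
Proof.
apply/span_subvP => z /allpairsP[[b c] [bZ cL ->]] /=.
move: bZ cL => /= /vbasis_mem bZ /vbasis_mem cL.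
move: b bZ; apply: span_ind.
- by rewrite tens0l mem0v.
- by move=> a u v Hu Hv; rewrite tens_linl memvD // memvZ.
move=> f /allpairsP[[i j] [_ _ ->]] /=.
move: c cL; apply: span_ind.
- by rewrite (_ : tens _ 0 = 0) ?mem0v //; apply/ffunP => x; rewrite !ffunE mulr0.
- by move=> a u v Hu Hv; rewrite tens_linr memvD // memvZ.
move=> v /mapP[t _ ->].
set X := tens _ _.
have XT : X \in T by rewrite memv_tens ?delta_Z ?lie_L.
have R := relT (t^-1)%g XT.
have -> : X = Defs.act (t^-1)%g X - (Defs.act (t^-1)%g X - X) by rewrite opprB addrC subrK.
rewrite memvB //; last by apply: (subvP (addvSl _ _)).
rewrite act_tens vrel_lie mulgV.
rewrite (_ : frl _ _ = frl (t^-1)%g (delta k i) - frl (t^-1)%g (delta k j)).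
  by rewrite !frel_delta; apply: Dxy.
by apply/ffunP => x; rewrite !ffunE.
Qed.

Lemma sum_L v : v \in L -> \sum_(s : {perm 'I_p}) v s = 0.
Proof.
move: v; apply: span_ind.
- by apply: big1 => s _; rewrite ffunE.
- move=> a u v Hu Hv; under eq_bigr => s _ do rewrite !ffunE.
  by rewrite big_split /= -mulr_sumr Hu Hv mulr0 addr0.
by move=> z /mapP[t _ ->]; rewrite lie_sum0 // ltnW.
Qed.

Lemma phiB (X Y : W) : phi e0 (X - Y) = phi e0 X - phi e0 Y.
Proof. by rewrite /phi -sumrB; apply: eq_bigr => s _; rewrite !ffunE. Qed.

Lemma phi_Rel X : X \in Rel -> phi e0 X = 0.
Proof.
case/memv_addP => u uC [v vR ->].
have phi0 : phi e0 (0 : W) = 0 by rewrite /phi big1 // => s _; rewrite ffunE.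
rewrite (_ : phi e0 (u + v) = 1 * phi e0 u + phi e0 v); last by rewrite -phi_lin scale1r.
rewrite mul1r.
have -> : phi e0 u = 0.
  move: u uC; apply: span_ind; first exact: phi0.
    by move=> a u1 u2 Hu Hv; rewrite phi_lin Hu Hv mulr0 addr0.
  move=> z /allpairsP[[b c] [bC cL ->]] /=.
  move: bC cL => /= /vbasis_mem /vlineP[a ->] /vbasis_mem cL.
  rewrite phi_tens; under eq_bigr => s _ do rewrite !ffunE.
  rewrite (_ : \sum_s _ = a%:A * \sum_(s : {perm 'I_p}) c s); last by rewrite mulr_sumr.
  by rewrite sum_L ?mulr0.
rewrite add0r; move: v vR; apply: span_ind; first exact: phi0.
  by move=> a u1 u2 Hu Hv; rewrite phi_lin Hu Hv mulr0 addr0.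
move=> z /allpairsP[[g Y] [_ _ ->]] /=.
by rewrite phiB phi_act subrr.
Qed.

Lemma phi_X0 : phi e0 X0 = 2%:R.
Proof.
have /and3P[n0 n1 _] := uniq_e.
rewrite /X0 /D phi_tens (lie_phi _ Ee word1).
rewrite (@Tr_local _ _ _ _ _ (fun w => (e0 == head e0 w)%:R - (e1 == head e0 w)%:R)); last first.
  by move=> w' _; rewrite !ffunE.
rewrite Tr_B (Tr_head k^o e0 n0) // [Tr (e1 :: _) _ _]/=.
rewrite (Tr_head k^o e0 n1) // (Tr_head k^o e0 n1) //=.
have ne : (e1 == e0) = false by apply/negP => /eqP E; move: n0; rewrite E inE eqxx.
by rewrite ne !eqxx sub0r opprK.
Qed.

Lemma X0_notin : X0 \notin Rel.
Proof.
apply/negP => /phi_Rel; rewrite phi_X0 => /eqP; apply/negP; exact: two_neq0.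
Qed.

Lemma main_dim : coinv_dim k p = 1%N.
Proof.
have X0T : X0 \in T by rewrite memv_tens ?delta_Z ?lie_L.
have ET : T = S.
  apply/eqP; rewrite eqEsubv T_S /= subv_add Rel_T /=.
  by apply/subvP => x /vlineP[a ->]; rewrite memvZ.
rewrite /coinv_dim ET.
have := dimv_sum_cap Rel <[X0]>.
rewrite dim_vline (_ : X0 != 0); last first.
  by apply: contraNneq X0_notin => ->; rewrite mem0v.
have -> : \dim (Rel :&: <[X0]>) = 0%N.
  apply/eqP; rewrite dimv_eq0; apply/eqP; apply/vspaceP => x.
  rewrite memv_cap memv0; apply/andP/eqP => [[xR /vlineP[a E]]|->]; last by rewrite !mem0v.
  subst x; move: xR => /phi_Rel.
  have phi0 : phi e0 (0 : W) = 0 by rewrite /phi big1 // => s _; rewrite ffunE.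
  rewrite -[a *: X0]addr0 phi_lin phi_X0 phi0 => H.
  have Ha : a * 2%:R = 0 by rewrite -H addr0.
  move/eqP: Ha; rewrite mulf_eq0 (negbTE two_neq0) orbF => /eqP ->.
  by rewrite scale0r addr0.
by rewrite addn0 => ->; rewrite addKn.
Qed.

End Main.

Theorem lemma6p1 (k : closedFieldType) (p : nat)
  (charp : p \in [pchar k]%R) (p_ge3 : (3 <= p)%N) :
  coinv_dim k p = 1%N.
Proof.
have [e0 [e1 [rest Ee]]] := enum3 p_ge3.
exact: (main_dim charp p_ge3 Ee).
Qed.
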